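(* Let $c>1/2$ and let $0<c_1<1<c_2$ be the two roots of $v\mapsto\phi(v)-c$, where $\phi(v)=\frac{v^2}{2}-\log v$. Then $$T_{c,2}\ge2\sqrt2\Big[\sqrt{\tfrac{c_1}{1+c_1}}+\sqrt{\tfrac{c_2}{1+c_2}}\Big].$$
   Context: Consider on $\{(u,v)\in\mathbb{R}^2:v>0\}$ the ODE $\dot u=v-\frac1v$, $\dot v=-u$. The function $H(u,v)=\frac12u^2+\phi(v)$, $\phi(v)=\frac{v^2}2-\log v$, is a first integral with minimum $1/2$ at $(0,1)$; for $c>1/2$ the level set $\{H=c,\ v>0\}$ is a closed curve carrying a periodic solution, and $T_{c,2}$ denotes its (minimal) period, equivalently $T_{c,2}=\sqrt2\int_{c_1}^{c_2}\frac{dv}{\sqrt{c-\phi(v)}}$. *)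

(* Defs.v *)
From Stdlib Require Import Reals Lra.
Open Scope R_scope.

Definition phi (v : R) : R := v ^ 2 / 2 - ln v.

Definition improper_integral (f : R -> R) (a b I : R) : Prop :=
  forall eps : R, eps > 0 ->
    exists delta : R, delta > 0 /\
      forall a' b' : R, a < a' < a + delta -> b - delta < b' < b -> a' < b' ->
        exists pr : Riemann_integrable f a' b', Rabs (RiemannInt pr - I) < eps.

(* T_{c,2} = sqrt 2 * \int_{c1}^{c2} dv / sqrt(c - phi v)  (improper integral) *)
Definition period_integrand (c : R) (v : R) : R := / sqrt (c - phi v).

(* Main.v *)
Require Import Defs.
From Stdlib Require Import Reals Lra Psatz.
From Coquelicot Require Import Coquelicot.
Open Scope R_scope.

Lemma ln_le_xm1 x : 0 < x -> ln x <= x - 1.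
Proof.
  intro Hx. rewrite <- (ln_exp (x - 1)). apply ln_le; auto.
  generalize (exp_ineq1_le (x-1)); lra.
Qed.

Lemma tang x y : 0 < x -> 0 < y ->
  phi y >= phi x + (x - /x)*(y-x) + (y-x)^2/2.
Proof.
  intros Hx Hy. unfold phi.
  assert (H: ln (y / x) <= y / x - 1) by (apply ln_le_xm1; apply Rdiv_lt_0_compat; lra).
  rewrite ln_div in H by lra.
  assert (E: y / x - 1 = (y - x) * / x) by (field; lra).
  rewrite E in H.
  assert (E2: x * /x = 1) by (field; lra).
  nra.
Qed.

Lemma sqrt_over a k : 0 <= a -> 0 < k -> sqrt a / k = sqrt (a / (k*k)).
Proof.
  intros Ha Hk. rewrite sqrt_div_alt by nra. rewrite sqrt_square by lra. reflexivity.
Qed.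

Lemma G1_int (k c1 a b : R) : 0 < k -> c1 < a -> a <= b ->
  is_RInt (fun v => / sqrt (k * (v - c1))) a b
  (2 * sqrt (k * (b - c1)) / k - 2 * sqrt (k * (a - c1)) / k).
Proof.
  intros Hk Ha Hab.
  apply (is_RInt_derive (fun v => 2 * sqrt (k * (v - c1)) / k)).
  - intros x Hx. rewrite Rmin_left in Hx by lra. rewrite Rmax_right in Hx by lra.
    auto_derive.
    + nra.
    + assert (0 < sqrt (k * (x - c1))) by (apply sqrt_lt_R0; nra). replace (x + - c1) with (x - c1) by ring. field. lra.
  - intros x Hx. rewrite Rmin_left in Hx by lra. rewrite Rmax_right in Hx by lra.
    apply (ex_derive_continuous (V:=R_NormedModule)). auto_derive.
    assert (0 < sqrt (k * (x - c1))) by (apply sqrt_lt_R0; nra). replace (x + - c1) with (x - c1) by ring. repeat split; try nra; lra.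
Qed.

Lemma G2_int (k c2 a b : R) : 0 < k -> b < c2 -> a <= b ->
  is_RInt (fun v => / sqrt (k * (c2 - v))) a b
  (2 * sqrt (k * (c2 - a)) / k - 2 * sqrt (k * (c2 - b)) / k).
Proof.
  intros Hk Ha Hab.
  replace (2 * sqrt (k * (c2 - a)) / k - 2 * sqrt (k * (c2 - b)) / k)
   with (minus ((fun v => - (2 * sqrt (k * (c2 - v)) / k)) b) ((fun v => - (2 * sqrt (k * (c2 - v)) / k)) a))
   by (unfold minus, plus, opp; simpl; ring).
  apply (is_RInt_derive (fun v => - (2 * sqrt (k * (c2 - v)) / k))).
  - intros x Hx. rewrite Rmin_left in Hx by lra. rewrite Rmax_right in Hx by lra.
    auto_derive.
    + nra.
    + assert (0 < sqrt (k * (c2 - x))) by (apply sqrt_lt_R0; nra). replace (c2 + - x) with (c2 - x) by ring. field. lra.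
  - intros x Hx. rewrite Rmin_left in Hx by lra. rewrite Rmax_right in Hx by lra.
    apply (ex_derive_continuous (V:=R_NormedModule)). auto_derive.
    assert (0 < sqrt (k * (c2 - x))) by (apply sqrt_lt_R0; nra). replace (c2 + - x) with (c2 - x) by ring. repeat split; try nra; lra.
Qed.

Lemma rint_bound (c c1 c2 a b : R) :
  0 < c1 -> c1 < 1 -> 1 < c2 -> phi c1 = c -> phi c2 = c ->
  c1 < a -> a <= 1 -> 1 <= b -> b < c2 ->
  ex_RInt (period_integrand c) a b ->
  RInt (period_integrand c) a b >=
    (2 * sqrt ((/c1 - c1) * (1 - c1)) / (/c1 - c1) - 2 * sqrt ((/c1 - c1) * (a - c1)) / (/c1 - c1))
  + (2 * sqrt ((c2 - /c2) * (c2 - 1)) / (c2 - /c2) - 2 * sqrt ((c2 - /c2) * (c2 - b)) / (c2 - /c2)).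
Proof.
  intros H1 H2 H3 E1 E2 Ha1 Ha2 Hb1 Hb2 Hex.
  set (k1 := /c1 - c1). set (k2 := c2 - /c2).
  assert (Hk1 : 0 < k1).
  { unfold k1. assert (1 < /c1). { rewrite <- Rinv_1. apply Rinv_lt_contravar; lra. } lra. }
  assert (Hk2 : 0 < k2).
  { unfold k2. assert (/c2 < 1). { rewrite <- Rinv_1. apply Rinv_lt_contravar; lra. } lra. }
  assert (pos : forall v, c1 < v < c2 -> 0 < c - phi v).
  { intros v Hv. generalize (tang v c1 ltac:(lra) ltac:(lra)). generalize (tang v c2 ltac:(lra) ltac:(lra)).
    rewrite E1, E2. intros T2 T1.
    set (d := v - / v) in *. set (p := phi v) in *.
    assert (M1 : (c2 - v) * (c - p - d*(c1 - v) - (c1-v)^2/2) >= 0) by (apply Rle_ge, Rmult_le_pos; lra).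
    assert (M2 : (v - c1) * (c - p - d*(c2 - v) - (c2-v)^2/2) >= 0) by (apply Rle_ge, Rmult_le_pos; lra).
    assert (M3 : 0 < (c2 - v) * (c1 - v)^2/2 + (v - c1) * (c2-v)^2/2).
    { assert (0 < (c2-v)*(v-c1)) by nra. nra. }
    assert (M4: 0 < c2 - c1) by lra.
    assert (M5: (c2 - c1) * (c - p) > 0) by nra.
    nra. }
  assert (bnd1 : forall v, 0 < v -> c - phi v <= k1 * (v - c1)).
  { intros v Hv. generalize (tang c1 v ltac:(lra) ltac:(lra)). rewrite E1. unfold k1. intros. generalize (pow2_ge_0 (v - c1)). nra. }
  assert (bnd2 : forall v, 0 < v -> c - phi v <= k2 * (c2 - v)).
  { intros v Hv. generalize (tang c2 v ltac:(lra) ltac:(lra)). rewrite E2. unfold k2. intros. generalize (pow2_ge_0 (c2 - v)). nra. }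
  assert (Hexa : ex_RInt (period_integrand c) a 1) by (apply (ex_RInt_Chasles_1 (V:=R_CompleteNormedModule) _ a 1 b); auto; lra).
  assert (Hexb : ex_RInt (period_integrand c) 1 b) by (apply (ex_RInt_Chasles_2 (V:=R_CompleteNormedModule) _ a 1 b); auto; lra).
  rewrite <- (RInt_Chasles (V:=R_CompleteNormedModule) _ a 1 b Hexa Hexb).
  assert (I1 := G1_int k1 c1 a 1 Hk1 Ha1 Ha2).
  assert (I2 := G2_int k2 c2 1 b Hk2 Hb2 Hb1).
  assert (L1 : RInt (fun v => / sqrt (k1 * (v - c1))) a 1 <= RInt (period_integrand c) a 1).
  { apply RInt_le; auto. eexists; exact I1.
    intros x Hx. unfold period_integrand. apply Rinv_le_contravar.
    apply sqrt_lt_R0; apply pos; lra. apply sqrt_le_1_alt. apply bnd1; lra. }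
  assert (L2 : RInt (fun v => / sqrt (k2 * (c2 - v))) 1 b <= RInt (period_integrand c) 1 b).
  { apply RInt_le; auto. eexists; exact I2.
    intros x Hx. unfold period_integrand. apply Rinv_le_contravar.
    apply sqrt_lt_R0; apply pos; lra. apply sqrt_le_1_alt. apply bnd2; lra. }
  rewrite (is_RInt_unique _ _ _ _ I1) in L1.
  rewrite (is_RInt_unique _ _ _ _ I2) in L2.
  unfold plus; simpl. lra.
Qed.

Theorem lemmaA4 (c c1 c2 I : R) :
  c > 1/2 ->
  0 < c1 -> c1 < 1 -> 1 < c2 ->
  phi c1 = c -> phi c2 = c ->
  improper_integral (period_integrand c) c1 c2 I ->
  sqrt 2 * I >= 2 * sqrt 2 * (sqrt (c1 / (1 + c1)) + sqrt (c2 / (1 + c2))).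
Proof.
  intros Hc H1 H2 H3 E1 E2 Himp.
  set (k1 := /c1 - c1). set (k2 := c2 - /c2).
  assert (Hk1 : 0 < k1).
  { unfold k1. assert (1 < /c1). { rewrite <- Rinv_1. apply Rinv_lt_contravar; lra. } lra. }
  assert (Hk2 : 0 < k2).
  { unfold k2. assert (/c2 < 1). { rewrite <- Rinv_1. apply Rinv_lt_contravar; lra. } lra. }
  assert (S1 : 2 * sqrt (k1 * (1 - c1)) / k1 = 2 * sqrt (c1 / (1 + c1))).
  { unfold Rdiv at 1. rewrite Rmult_assoc. fold (Rdiv (sqrt (k1 * (1 - c1))) k1).
    rewrite sqrt_over by nra. f_equal. f_equal. unfold k1.
    field. split; [lra|]. split; [lra|]. intro. nra. }
  assert (S2 : 2 * sqrt (k2 * (c2 - 1)) / k2 = 2 * sqrt (c2 / (1 + c2))).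
  { unfold Rdiv at 1. rewrite Rmult_assoc. fold (Rdiv (sqrt (k2 * (c2 - 1))) k2).
    rewrite sqrt_over by nra. f_equal. f_equal. unfold k2.
    field. split; [lra|]. split; [lra|]. intro. nra. }
  set (T := 2 * sqrt (k1 * (1 - c1)) / k1 + 2 * sqrt (k2 * (c2 - 1)) / k2).
  assert (HT : I >= T).
  { destruct (Rge_dec I T) as [h|h]; auto. exfalso.
    set (eps := (T - I) / 3).
    assert (He : eps > 0) by (unfold eps; lra).
    destruct (Himp eps He) as [delta [Hd Hdel]].
    set (s := eps / (2/k1 + 2/k2)).
    assert (Hs : 0 < s).
    { unfold s. apply Rdiv_lt_0_compat; [lra|].
      assert (0 < 2/k1) by (apply Rdiv_lt_0_compat; lra).
      assert (0 < 2/k2) by (apply Rdiv_lt_0_compat; lra). lra. }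
    assert (Hseps : 2 * s / k1 + 2 * s / k2 = eps) by (unfold s; field; split; [|split]; try lra;
      intro Hz; assert (0 < 2/k1 + 2/k2) by (unfold Rdiv; assert (0 < /k1) by (apply Rinv_0_lt_compat; lra);
        assert (0 < /k2) by (apply Rinv_0_lt_compat; lra); lra); unfold Rdiv in *; lra).
    set (q := s * s / (k1 + k2)).
    assert (Hq : 0 < q) by (unfold q; apply Rdiv_lt_0_compat; nra).
    set (t := Rmin (Rmin (delta/2) ((1-c1)/2)) (Rmin ((c2-1)/2) q)).
    assert (Ht0 : 0 < t).
    { unfold t. repeat apply Rmin_pos; lra. }
    assert (Ht1 : t <= delta/2) by (unfold t; eapply Rle_trans; [apply Rmin_l|apply Rmin_l]).
    assert (Ht2 : t <= (1-c1)/2) by (unfold t; eapply Rle_trans; [apply Rmin_l|apply Rmin_r]).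
    assert (Ht3 : t <= (c2-1)/2) by (unfold t; eapply Rle_trans; [apply Rmin_r|apply Rmin_l]).
    assert (Ht4 : t <= q) by (unfold t; eapply Rle_trans; [apply Rmin_r|apply Rmin_r]).
    assert (Htq : t * (k1 + k2) <= s * s).
    { unfold q in Ht4. apply (Rmult_le_compat_r (k1 + k2)) in Ht4; [|lra].
      replace (s * s / (k1 + k2) * (k1 + k2)) with (s * s) in Ht4 by (field; lra). lra. }
    destruct (Hdel (c1 + t) (c2 - t) ltac:(lra) ltac:(lra) ltac:(lra)) as [pr Hpr].
    assert (B := rint_bound c c1 c2 (c1 + t) (c2 - t) H1 H2 H3 E1 E2 ltac:(lra) ltac:(lra) ltac:(lra) ltac:(lra)
                   (ex_RInt_Reals_1 _ _ _ pr)).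
    rewrite (RInt_Reals _ _ _ pr) in B. fold k1 k2 in B.
    replace (c1 + t - c1) with t in B by ring.
    replace (c2 - (c2 - t)) with t in B by ring.
    assert (Q1 : sqrt (k1 * t) <= s).
    { rewrite <- (sqrt_square s) by lra. apply sqrt_le_1_alt. nra. }
    assert (Q2 : sqrt (k2 * t) <= s).
    { rewrite <- (sqrt_square s) by lra. apply sqrt_le_1_alt. nra. }
    assert (R1 : 2 * sqrt (k1 * t) / k1 <= 2 * s / k1).
    { unfold Rdiv. apply Rmult_le_compat_r. left; apply Rinv_0_lt_compat; lra. lra. }
    assert (R2 : 2 * sqrt (k2 * t) / k2 <= 2 * s / k2).
    { unfold Rdiv. apply Rmult_le_compat_r. left; apply Rinv_0_lt_compat; lra. lra. }
    apply Rabs_def2 in Hpr. destruct Hpr as [P1 P2].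
    assert (Teq : T = 2 * sqrt (k1 * (1 - c1)) / k1 + 2 * sqrt (k2 * (c2 - 1)) / k2) by reflexivity.
    assert (Eeq : eps * 3 = T - I) by (unfold eps; field).
    lra. }
  assert (0 < sqrt 2) by (apply sqrt_lt_R0; lra).
  unfold T in HT. rewrite S1, S2 in HT. nra.
Qed.
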